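(* In the Schwarzschild spacetime with line element $$ds^2=-\left(1-\frac{2m}{r}\right)dt^2+\left(1-\frac{2m}{r}\right)^{-1}dr^2+r^2\left(d\theta^2+\sin^2\theta\, d\varphi^2\right)$$ ($m>0$, $r>2m$, $0<\theta<\pi$), consider a test particle on an equatorial circular geodesic orbit of radius $r_1>3m$, with 4-velocity $$U'=\left(\sqrt{\frac{r_1}{r_1-3m}},\,0,\,0,\,\frac{1}{r_1}\sqrt{\frac{m}{r_1-3m}}\right)$$ in coordinates $(t,r,\theta,\varphi)$. Let $\beta$ be any stationary observer (constant $r,\theta,\varphi$) with 4-velocity field $U=\left(1-\frac{2m}{r}\right)^{-1/2}\frac{\partial}{\partial t}$. For any event $p$ of $\beta$ and any event $q$ of the test particle joined to $p$ by a spacelike geodesic segment orthogonal to $U_p$ at $p$, the kinematic relative velocity $v_{\mathrm{kin}}$ of $U'_q$ with respect to $U_p$ satisfies $$\|v_{\mathrm{kin}}\|^2=\frac{m}{r_1-2m};$$ in particular, it is constant along $\beta$ and independent of the chosen stationary observer.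
   Context: Signature $(-,+,+,+)$, $c=1$; for spacelike $x$, $\|x\|=g(x,x)^{1/2}$. Given an observer $u$ (future-pointing unit timelike vector) at $p$, a test particle with 4-velocity $u'$ at $q$, and a spacelike geodesic segment $\psi$ from $p$ to $q$ orthogonal to $u$ at $p$, let $\tau_{qp}$ be parallel transport from $q$ to $p$ along $\psi$. The kinematic relative velocity of $u'$ with respect to $u$ is $v_{\mathrm{kin}}=\frac{1}{-g(\tau_{qp}u',u)}\tau_{qp}u'-u$. *)

(* Defs.v *)
From Stdlib Require Import Reals Lra.
From Coquelicot Require Import Coquelicot.
Open Scope R_scope.

(* Coordinates (t, r, theta, phi) are indices 0,1,2,3.  Points and tangent
   vectors are given by their coordinate components  nat -> R  (only
   indices 0..3 matter). *)
Definition coords := nat -> R.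

Definition sum4 (f : nat -> R) : R := f 0%nat + f 1%nat + f 2%nat + f 3%nat.

Definition gdiag (m : R) (x : coords) (a : nat) : R :=
  match a with
  | 0%nat => - (1 - 2 * m / x 1%nat)
  | 1%nat => / (1 - 2 * m / x 1%nat)
  | 2%nat => (x 1%nat) ^ 2
  | 3%nat => (x 1%nat) ^ 2 * (sin (x 2%nat)) ^ 2
  | _ => 0
  end.

Definition gmet (m : R) (x : coords) (a b : nat) : R :=
  if Nat.eqb a b then gdiag m x a else 0.

Definition ginner (m : R) (x : coords) (u v : coords) : R :=
  sum4 (fun a => gdiag m x a * u a * v a).

Definition upd (x : coords) (c : nat) (h : R) : coords :=
  fun i => if Nat.eqb i c then h else x i.

Definition dg (m : R) (x : coords) (c a b : nat) : R :=
  Derive (fun h => gmet m (upd x c h) a b) (x c).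

(* Christoffel symbols of the Levi-Civita connection,
   Gamma^a_bc = 1/2 g^{aa} (d_b g_ac + d_c g_ab - d_a g_bc)
   (the inverse metric is diagonal with g^{aa} = 1/g_aa). *)
Definition Chr (m : R) (x : coords) (a b c : nat) : R :=
  / 2 * / gdiag m x a * (dg m x b a c + dg m x c a b - dg m x a b c).

Definition in_domain (m : R) (x : coords) : Prop :=
  2 * m < x 1%nat /\ 0 < x 2%nat < PI.

Definition is_geodesic_segment (m : R) (gam vel acc : R -> coords) : Prop :=
  forall s, 0 <= s <= 1 ->
    in_domain m (gam s) /\
    forall a, (a < 4)%nat ->
      is_derive (fun u => gam u a) s (vel s a) /\
      is_derive (fun u => vel u a) s (acc s a) /\
      acc s a + sum4 (fun b => sum4 (fun c =>
                  Chr m (gam s) a b c * vel s b * vel s c)) = 0.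

Definition is_parallel_along (m : R) (gam vel V : R -> coords) : Prop :=
  forall s, 0 <= s <= 1 ->
    forall a, (a < 4)%nat ->
      exists dV : R,
        is_derive (fun u => V u a) s dV /\
        dV + sum4 (fun b => sum4 (fun c =>
               Chr m (gam s) a b c * vel s b * V s c)) = 0.

Definition Ustat (m : R) (x : coords) : coords :=
  fun a => if Nat.eqb a 0 then / sqrt (1 - 2 * m / x 1%nat) else 0.

Definition Ucirc (m r1 : R) : coords :=
  fun a => match a with
           | 0%nat => sqrt (r1 / (r1 - 3 * m))
           | 3%nat => / r1 * sqrt (m / (r1 - 3 * m))
           | _ => 0
           end.

(* kinematic relative velocity of u' (already transported to p) w.r.t. u at p *)
Definition vkin (m : R) (p : coords) (tu' u : coords) : coords :=
  fun a => / (- ginner m p tu' u) * tu' a - u a.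

(* Main.v *)
Require Import Defs.
From Stdlib Require Import Reals Lra Lia.
From Coquelicot Require Import Coquelicot.
Open Scope R_scope.

Lemma D_mult (f g : R -> R) (x df dg : R) : is_derive f x df -> is_derive g x dg ->
  is_derive (fun t => f t * g t) x (df * g x + f x * dg).
Proof. intros H1 H2. apply (is_derive_mult f g x df dg H1 H2). intros; apply Rmult_comm. Qed.

Lemma D_plus (f g : R -> R) (x df dg : R) : is_derive f x df -> is_derive g x dg ->
  is_derive (fun t => f t + g t) x (df + dg).
Proof. intros H1 H2. apply (is_derive_plus f g x df dg H1 H2). Qed.

Lemma D_comp (F g : R -> R) x dF dg : is_derive F (g x) dF -> is_derive g x dg ->
  is_derive (fun t => F (g t)) x (dg * dF).
Proof. intros H1 H2. apply (@is_derive_comp R_AbsRing R_NormedModule F g x dF dg H1 H2). Qed.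

Lemma D_eq (f : R -> R) (x d1 d2 : R) : is_derive f x d1 -> d1 = d2 -> is_derive f x d2.
Proof. intros H ->; exact H. Qed.

Lemma const01 (f df : R -> R) : (forall s, 0<=s<=1 -> is_derive f s (df s)) ->
  (forall s, 0<=s<=1 -> df s = 0) -> forall s, 0<=s<=1 -> f s = f 0.
Proof.
intros Hd H0 s Hs.
destruct (Req_dec s 0) as [->|Hs0]; [reflexivity|].
destruct (MVT_gen f 0 s df) as [c [Hc Hm]].
- intros x Hx. rewrite Rmin_left in Hx by lra. rewrite Rmax_right in Hx by lra.
  apply Hd; lra.
- intros x Hx. rewrite Rmin_left in Hx by lra. rewrite Rmax_right in Hx by lra.
  apply continuity_pt_filterlim. apply (@ex_derive_continuous R_AbsRing R_NormedModule). exists (df x). apply Hd; lra.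
- rewrite Rmin_left in Hc by lra. rewrite Rmax_right in Hc by lra.
  rewrite H0 in Hm by lra. lra.
Qed.
Definition dgx (m : R) (x : coords) (c a b : nat) : R :=
  match c, a, b with
  | 1%nat, 0%nat, 0%nat => - (2 * m / (x 1%nat ^ 2))
  | 1%nat, 1%nat, 1%nat => - (2 * m / (x 1%nat ^ 2)) / (1 - 2 * m / x 1%nat) ^ 2
  | 1%nat, 2%nat, 2%nat => 2 * x 1%nat
  | 1%nat, 3%nat, 3%nat => 2 * x 1%nat * sin (x 2%nat) ^ 2
  | 2%nat, 3%nat, 3%nat => x 1%nat ^ 2 * (2 * sin (x 2%nat) * cos (x 2%nat))
  | _, _, _ => 0
  end.
Lemma dg_val m x c a b (hm : 0 < m) (hx : 2 * m < x 1%nat) : dg m x c a b = dgx m x c a b.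
Proof.

assert (h0 : x 1%nat <> 0) by lra.
assert (h1 : 1 - 2 * m / x 1%nat <> 0).
{ apply Rgt_not_eq. apply Rlt_gt. apply Rlt_Rminus. apply (Rmult_lt_reg_r (x 1%nat)); [lra|].
  field_simplify; lra. }
assert (h2 : x 1%nat - 2 * m <> 0) by lra.
unfold dg, gmet, upd.
destruct c as [|[|[|[|c]]]]; destruct a as [|[|[|[|a]]]]; destruct b as [|[|[|[|b]]]];
 simpl; apply is_derive_unique; auto_derive; repeat split; try auto; try (field; split; auto); try (field; auto); try ring.
Qed.

Lemma Dgdiag m (gam : R -> coords) s a dr dth : 0 < m -> 2 * m < gam s 1%nat ->
  is_derive (fun u => gam u 1%nat) s dr -> is_derive (fun u => gam u 2%nat) s dth ->
  is_derive (fun u => gdiag m (gam u) a) s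
    (dr * dgx m (gam s) 1 a a + dth * dgx m (gam s) 2 a a).
Proof.
intros hm hx Hr Ht.
assert (h0 : gam s 1%nat <> 0) by lra.
assert (h2 : gam s 1%nat - 2 * m <> 0) by lra.
assert (h1 : 1 - 2 * m / gam s 1%nat <> 0).
{ apply Rgt_not_eq. apply Rlt_gt. apply Rlt_Rminus. apply (Rmult_lt_reg_r (gam s 1%nat)); [lra|].
  field_simplify; lra. }
destruct a as [|[|[|[|a]]]].
- change (fun u => gdiag m (gam u) 0) with (fun u => (fun r => -(1 - 2*m/r)) (gam u 1%nat)).
  eapply D_eq. apply (D_comp (fun r => -(1 - 2*m/r)) _ _ (-(2*m/(gam s 1%nat)^2))); [|exact Hr].
  auto_derive; [auto|field; auto]. simpl; ring.
- change (fun u => gdiag m (gam u) 1) with (fun u => (fun r => /(1 - 2*m/r)) (gam u 1%nat)).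
  eapply D_eq. apply (D_comp (fun r => /(1 - 2*m/r)) _ _
     (- (2 * m / (gam s 1%nat ^ 2)) / (1 - 2 * m / gam s 1%nat) ^ 2)); [|exact Hr].
  auto_derive; [repeat split; auto|field; auto]. simpl; field; auto.
- change (fun u => gdiag m (gam u) 2) with (fun u => (fun r => r^2) (gam u 1%nat)).
  eapply D_eq. apply (D_comp (fun r => r^2) _ _ (2 * gam s 1%nat)); [|exact Hr].
  auto_derive; [auto|ring]. simpl; ring.
- change (fun u => gdiag m (gam u) 3) with
   (fun u => (fun r => r^2) (gam u 1%nat) * (fun t => sin t ^ 2) (gam u 2%nat)).
  eapply D_eq. apply D_mult.
  apply (D_comp (fun r => r^2) _ _ (2 * gam s 1%nat)); [|exact Hr]. auto_derive; [auto|ring].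
  apply (D_comp (fun t => sin t ^ 2) _ _ (2 * sin (gam s 2%nat) * cos (gam s 2%nat))); [|exact Ht].
  auto_derive; [auto|ring]. simpl; ring.
- simpl. eapply D_eq. apply is_derive_const. unfold zero; simpl; ring.
Qed.

Lemma Dginner m (gam V : R -> coords) s dr dth (dV : nat -> R) : 0 < m -> 2 * m < gam s 1%nat ->
  is_derive (fun u => gam u 1%nat) s dr -> is_derive (fun u => gam u 2%nat) s dth ->
  (forall a, (a < 4)%nat -> is_derive (fun u => V u a) s (dV a)) ->
  is_derive (fun u => ginner m (gam u) (V u) (V u)) s
   (sum4 (fun a => (dr * dgx m (gam s) 1 a a + dth * dgx m (gam s) 2 a a) * V s a * V s a
       + gdiag m (gam s) a * dV a * V s a + gdiag m (gam s) a * V s a * dV a)).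
Proof.
intros hm hx Hr Ht HV.
set (Tm := fun a u => gdiag m (gam u) a * V u a * V u a).
assert (HT : forall a, (a < 4)%nat -> is_derive (Tm a) s
   ((dr * dgx m (gam s) 1 a a + dth * dgx m (gam s) 2 a a) * V s a * V s a
       + gdiag m (gam s) a * dV a * V s a + gdiag m (gam s) a * V s a * dV a)).
{ intros a Ha. unfold Tm. eapply D_eq.
  apply D_mult; [apply D_mult; [apply (Dgdiag m gam s a dr dth); auto | apply HV; auto] | apply HV; auto].
  cbv beta; ring. }
change (fun u => ginner m (gam u) (V u) (V u)) with
  (fun u => Tm 0%nat u + Tm 1%nat u + Tm 2%nat u + Tm 3%nat u).
unfold sum4.
apply D_plus; [apply D_plus; [apply D_plus|]|]; apply HT; lia.
Qed.

Lemma r_pos m x : 0 < m -> 2 * m < x -> 1 - 2 * m / x > 0.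
Proof. intros hm hx. apply Rlt_gt. apply Rlt_0_minus. apply (Rmult_lt_reg_r x); [lra|].
  field_simplify; lra. Qed.

Lemma ginner_lin m x k (w u : coords) :
  ginner m x (fun a => / k * w a - u a) (fun a => / k * w a - u a) =
  /k * /k * ginner m x w w - 2 * /k * ginner m x w u + ginner m x u u.
Proof. unfold ginner, sum4. ring. Qed.

Theorem mainTheorem4 (m r1 : R) (hm : 0 < m) (hr1 : 3 * m < r1)
  (gam vel acc V : R -> coords)
  (hq_r : gam 1 1%nat = r1) (hq_th : gam 1 2%nat = PI / 2)
  (hgeo : is_geodesic_segment m gam vel acc)
  (hspace : 0 < ginner m (gam 0) (vel 0) (vel 0))
  (horth : ginner m (gam 0) (vel 0) (Ustat m (gam 0)) = 0)
  (hpar : is_parallel_along m gam vel V)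
  (hV1 : forall a, (a < 4)%nat -> V 1 a = Ucirc m r1 a) :
  let v := vkin m (gam 0) (V 0) (Ustat m (gam 0)) in
  ginner m (gam 0) v v = m / (r1 - 2 * m).
Proof.
intros v.
assert (HA : forall s, 0 <= s <= 1 -> vel s 0%nat = 0).
{ assert (Hc : forall s, 0 <= s <= 1 -> gdiag m (gam s) 0 * vel s 0%nat = gdiag m (gam 0) 0 * vel 0 0%nat).
  { apply (const01 (fun u => gdiag m (gam u) 0 * vel u 0%nat) (fun _ => 0)); [|auto].
    intros s Hs. destruct (hgeo s Hs) as [[Hx [_ Hth]] Hg].
    destruct (Hg 0%nat ltac:(lia)) as [_ [Ha E]].
    destruct (Hg 1%nat ltac:(lia)) as [Hr _].
    destruct (Hg 2%nat ltac:(lia)) as [Ht _].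
    eapply D_eq. apply D_mult; [apply Dgdiag; eauto|exact Ha].
    match type of E with ?d + ?S = 0 => assert (Ed : d = - S) by lra end.
    rewrite Ed. unfold sum4, Chr. rewrite !(dg_val m (gam s) _ _ _ hm Hx). unfold dgx, gdiag; simpl.
    assert (h0 : gam s 1%nat <> 0) by lra.
    assert (h2 : gam s 1%nat - 2 * m <> 0) by lra.
    assert (h1 := r_pos m _ hm Hx).
    assert (h1' : 1 - 2 * m / gam s 1%nat <> 0) by lra.
    field. repeat split; auto. }
  assert (H00 : vel 0 0%nat = 0).
  { destruct (hgeo 0 ltac:(lra)) as [[Hx0 _] _].
    assert (hsq : sqrt (1 - 2 * m / gam 0 1%nat) > 0) by (apply sqrt_lt_R0; apply r_pos; auto).
    assert (h1 := r_pos m _ hm Hx0).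
    unfold ginner, sum4, Ustat in horth; simpl in horth.
    rewrite !Rmult_0_r, !Rplus_0_r in horth.
    apply Rmult_integral in horth. destruct horth as [H|H].
    - apply Rmult_integral in H. destruct H as [H|H]; [lra|exact H].
    - exfalso. apply (Rinv_neq_0_compat (sqrt (1 - 2 * m / gam 0 1%nat))); lra. }
  intros s Hs. specialize (Hc s Hs). rewrite H00, Rmult_0_r in Hc.
  destruct (hgeo s Hs) as [[Hx _] _].
  assert (h1 := r_pos m _ hm Hx).
  apply Rmult_integral in Hc. simpl in Hc. destruct Hc; lra. }
assert (HB : sqrt (1 - 2 * m / gam 0 1%nat) * V 0 0%nat = sqrt (1 - 2 * m / gam 1 1%nat) * V 1 0%nat).
{ symmetry.
  apply (const01 (fun u => sqrt (1 - 2 * m / gam u 1%nat) * V u 0%nat) (fun _ => 0)); [|auto|lra].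
  intros s Hs. destruct (hgeo s Hs) as [[Hx [_ Hth]] Hg].
  destruct (Hg 1%nat ltac:(lia)) as [Hr _].
  destruct (hpar s Hs 0%nat ltac:(lia)) as [d0 [Hd0 E0]].
  assert (h0 : gam s 1%nat <> 0) by lra.
  assert (h1 := r_pos m _ hm Hx).
  assert (h1' : 1 - 2 * m / gam s 1%nat <> 0) by lra.
  assert (hsq : sqrt (1 - 2 * m / gam s 1%nat) > 0) by (apply sqrt_lt_R0; auto).
  eapply D_eq. apply D_mult; [|exact Hd0].
  apply (D_comp (fun r => sqrt (1 - 2 * m / r)) (fun u => gam u 1%nat) s
     ((2 * m / (gam s 1%nat ^ 2)) / (2 * sqrt (1 - 2 * m / gam s 1%nat))) (vel s 1%nat)); [|exact Hr].
  auto_derive. { split; [auto|split; [|exact I]]. unfold Rminus, Rdiv in h1. lra. }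
  { replace (1 + - (2 * m * / gam s 1%nat)) with (1 - 2*m/gam s 1%nat) by (unfold Rdiv; ring).
    field. split; lra. }
  cbv beta.
  match type of E0 with ?d + ?S = 0 => assert (Ed : d = - S) by lra end.
  rewrite Ed. unfold sum4, Chr. rewrite !(dg_val m (gam s) _ _ _ hm Hx). unfold dgx, gdiag; simpl.
  rewrite (HA s Hs).
  assert (HS := sqrt_sqrt (1 - 2 * m / gam s 1%nat) ltac:(lra)).
  set (S := sqrt (1 - 2 * m / gam s 1%nat)) in *.
  rewrite <- HS. field. repeat split; lra. }
assert (HC : ginner m (gam 0) (V 0) (V 0) = ginner m (gam 1) (V 1) (V 1)).
{ symmetry.
  apply (const01 (fun u => ginner m (gam u) (V u) (V u)) (fun _ => 0)); [|auto|lra].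
  intros s Hs. destruct (hgeo s Hs) as [[Hx [Ht0 Ht1]] Hg].
  destruct (Hg 1%nat ltac:(lia)) as [Hr _].
  destruct (Hg 2%nat ltac:(lia)) as [Ht _].
  destruct (hpar s Hs 0%nat ltac:(lia)) as [d0 [Hd0 E0]].
  destruct (hpar s Hs 1%nat ltac:(lia)) as [d1 [Hd1 E1]].
  destruct (hpar s Hs 2%nat ltac:(lia)) as [d2 [Hd2 E2]].
  destruct (hpar s Hs 3%nat ltac:(lia)) as [d3 [Hd3 E3]].
  eapply D_eq.
  apply (Dginner m gam V s (vel s 1%nat) (vel s 2%nat) (fun a => match a with 0%nat => d0 | 1%nat => d1 | 2%nat => d2 | _ => d3 end));
   auto.
  { intros a Ha. destruct a as [|[|[|[|a]]]]; auto; lia. }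
  match type of E0 with ?d + ?S = 0 => assert (Ed0 : d = - S) by lra end.
  match type of E1 with ?d + ?S = 0 => assert (Ed1 : d = - S) by lra end.
  match type of E2 with ?d + ?S = 0 => assert (Ed2 : d = - S) by lra end.
  match type of E3 with ?d + ?S = 0 => assert (Ed3 : d = - S) by lra end.
  rewrite Ed0, Ed1, Ed2, Ed3. unfold sum4, Chr. rewrite !(dg_val m (gam s) _ _ _ hm Hx). unfold dgx, gdiag; simpl.
  assert (h0 : gam s 1%nat <> 0) by lra.
  assert (h2 : gam s 1%nat - 2 * m <> 0) by lra.
  assert (h1 := r_pos m _ hm Hx).
  assert (h1' : 1 - 2 * m / gam s 1%nat <> 0) by lra.
  assert (hsin : sin (gam s 2%nat) <> 0) by (apply Rgt_not_eq; apply sin_gt_0; lra).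
  field. repeat split; auto. }
destruct (hgeo 0 ltac:(lra)) as [[Hx0 _] _].
assert (h1 := r_pos m _ hm Hx0).
assert (HS := sqrt_sqrt (1 - 2 * m / gam 0 1%nat) ltac:(lra)).
assert (hsq : sqrt (1 - 2 * m / gam 0 1%nat) > 0) by (apply sqrt_lt_R0; auto).
assert (hr1m : r1 - 3 * m > 0) by lra.
assert (Hq1 : 1 - 2 * m / r1 > 0) by (apply r_pos; lra).
assert (Hq2 : r1 / (r1 - 3 * m) > 0) by (apply Rdiv_lt_0_compat; lra).
assert (Hq3 : m / (r1 - 3 * m) > 0) by (apply Rdiv_lt_0_compat; lra).
assert (HN : ginner m (gam 0) (V 0) (V 0) = -1).
{ rewrite HC. unfold ginner, sum4. rewrite !hV1 by lia. unfold Ucirc, gdiag. rewrite hq_r, hq_th, sin_PI2.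
  rewrite (Rmult_assoc (- (1 - 2 * m / r1))), (sqrt_sqrt (r1 / (r1 - 3 * m))) by lra.
  replace (r1 ^ 2 * 1 ^ 2 * (/ r1 * sqrt (m / (r1 - 3 * m))) * (/ r1 * sqrt (m / (r1 - 3 * m))))
    with (r1 ^ 2 * / r1 * / r1 * (sqrt (m / (r1 - 3 * m)) * sqrt (m / (r1 - 3 * m)))) by ring.
  rewrite (sqrt_sqrt (m / (r1 - 3 * m))) by lra.
  field. lra. }
rewrite hq_r, hV1 in HB by lia. unfold Ucirc in HB.
set (gm := sqrt (1 - 2 * m / r1) * sqrt (r1 / (r1 - 3 * m))) in HB.
assert (Hgm : gm * gm = (r1 - 2 * m) / (r1 - 3 * m)).
{ unfold gm. replace (sqrt (1 - 2 * m / r1) * sqrt (r1 / (r1 - 3 * m)) *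
    (sqrt (1 - 2 * m / r1) * sqrt (r1 / (r1 - 3 * m)))) with
   ((sqrt (1 - 2 * m / r1) * sqrt (1 - 2 * m / r1)) * (sqrt (r1 / (r1 - 3 * m)) * sqrt (r1 / (r1 - 3 * m)))) by ring.
  rewrite !sqrt_sqrt by lra. field. lra. }
assert (Hgp : gm > 0) by (unfold gm; apply Rmult_lt_0_compat; apply sqrt_lt_R0; lra).
assert (HVU : ginner m (gam 0) (V 0) (Ustat m (gam 0)) = - gm).
{ rewrite <- HB. unfold ginner, sum4, Ustat; simpl.
  set (S := sqrt (1 - 2 * m / gam 0 1%nat)) in *. rewrite <- HS. field. lra. }
assert (HUU : ginner m (gam 0) (Ustat m (gam 0)) (Ustat m (gam 0)) = -1).
{ unfold ginner, sum4, Ustat; simpl.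
  set (S := sqrt (1 - 2 * m / gam 0 1%nat)) in *. rewrite <- HS. field. lra. }
unfold v, vkin. rewrite ginner_lin, HN, HVU, HUU.
replace (- - gm) with gm by ring.
apply (Rmult_eq_reg_r (gm * gm)); [|nra].
replace ((/ gm * / gm * -1 - 2 * / gm * - gm + -1) * (gm * gm)) with (gm * gm - 1) by (field; lra).
rewrite Hgm. field. lra.
Qed.
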